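(* Let $n\ge 2$ and $k\ge 1$. For all $i\in[0,k]$, $$\mathfrak{z}_i(n,k)=(k+1)\,\mathfrak{z}_i(n-1,k)+(i+1)\sum_{j=i+1}^{k}\mathfrak{z}_j(n-1,k).$$
   Context: A triword of size $n$ is a word $u=u_1\cdots u_n$ with $u_i\in\{0,1,2\}$, $u_1\ne 2$, and such that $u_i=0$ implies $u_j\neq 1$ for all $j>i$; $\mathsf{Tr}(n)$ is their set, ordered componentwise ($u\preccurlyeq v$ iff $u_i\le v_i$ for all $i$). A $k$-chain of $\mathsf{Tr}(n)$ is a sequence $[u^{(1)},\dots,u^{(k)}]$ of triwords of size $n$ with $u^{(1)}\preccurlyeq u^{(2)}\preccurlyeq\cdots\preccurlyeq u^{(k)}$ (repetitions allowed). For $i\in[0,k]$, $\mathcal{Z}_i(n,k)$ is the set of $k$-chains such that $u^{(r)}$ contains the letter $0$ for all $r\in[k-i]$ and $u^{(s)}$ does not contain the letter $0$ for all $s\in[k-i+1,k]$; $\mathfrak{z}_i(n,k):=\#\mathcal{Z}_i(n,k)$. *)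

(* Defs.v *)
From mathcomp Require Import all_boot all_order.
Set Implicit Arguments. Unset Strict Implicit. Unset Printing Implicit Defensive.

Definition is_triword (n : nat) (u : n.-tuple 'I_3) : bool :=
  (if n is _.+1 then nat_of_ord (nth ord0 u 0) != 2 else true) &&
  [forall i : 'I_n, forall j : 'I_n,
     ((i < j) && (nat_of_ord (tnth u i) == 0)) ==> (nat_of_ord (tnth u j) != 1)].

Definition tw_le (n : nat) (u v : n.-tuple 'I_3) : bool :=
  [forall i : 'I_n, nat_of_ord (tnth u i) <= nat_of_ord (tnth v i)].

Definition has_zero (n : nat) (u : n.-tuple 'I_3) : bool :=
  [exists i : 'I_n, nat_of_ord (tnth u i) == 0].

(* k-chains: k-tuples [u^(1),...,u^(k)] (stored 0-indexed) of triwords,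
   weakly increasing. *)
Definition is_chain (n k : nat) (c : k.-tuple (n.-tuple 'I_3)) : bool :=
  [forall r : 'I_k, is_triword (tnth c r)] &&
  [forall r : 'I_k, forall s : 'I_k, (r < s) ==> tw_le (tnth c r) (tnth c s)].

(* Z_i(n,k): chains whose u^(r) contains 0 for r in [1, k-i] and whose
   u^(s) contains no 0 for s in [k-i+1, k]. With 0-indexed position r,
   u^(r+1) contains 0 iff r < k - i. *)
Definition Zset (n k i : nat) : {set k.-tuple (n.-tuple 'I_3)} :=
  [set c | is_chain c &&
     [forall r : 'I_k, has_zero (tnth c r) == (nat_of_ord r < k - i)]].

Definition zfrak (i n k : nat) : nat := #|Zset n k i|.

(* Main.v *)
Require Import Defs.
From mathcomp Require Import all_boot all_order.
From mathcomp Require Import zify.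
Set Implicit Arguments. Unset Strict Implicit. Unset Printing Implicit Defensive.

Definition Lx (u : seq 'I_3) p : nat := nat_of_ord (nth ord0 u p).

Lemma triwordP n (u : n.-tuple 'I_3) :
  reflect ((0 < n -> Lx u 0 != 2) /\
           (forall p q, p < q -> q < n -> Lx u p = 0 -> Lx u q != 1))
          (is_triword u).
Proof.
rewrite /is_triword.
have E : (if n is _.+1 then nat_of_ord (nth ord0 u 0) != 2 else true) = ((0 < n) ==> (Lx u 0 != 2)).
  by case: n u.
rewrite E; apply: (iffP andP) => [[/implyP h1 /forallP h2]|[h1 h2]]; split => //.
- move=> p q pq qn zp.
  have := h2 (Ordinal (ltn_trans pq qn)) => /forallP /(_ (Ordinal qn)).
  by rewrite /= pq !(tnth_nth ord0) /=; move: zp; rewrite /Lx => ->.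
- by apply/implyP.
- apply/forallP => p; apply/forallP => q; apply/implyP => /andP[pq].
  rewrite !(tnth_nth ord0) => /eqP; exact: h2.
Qed.

Lemma tw_leP n (u v : n.-tuple 'I_3) :
  reflect (forall p, p < n -> Lx u p <= Lx v p) (tw_le u v).
Proof.
apply: (iffP forallP) => [h p pn|h p].
  by have := h (Ordinal pn); rewrite !(tnth_nth ord0).
by rewrite !(tnth_nth ord0); apply: h.
Qed.

Lemma hzE n (u : n.-tuple 'I_3) :
  has_zero u = has (fun x : 'I_3 => nat_of_ord x == 0) u.
Proof.
apply/existsP/(has_nthP ord0) => [[i hi]|[i hi h]].
  by exists i; rewrite ?size_tuple // -tnth_nth.
rewrite size_tuple in hi; exists (Ordinal hi); by rewrite (tnth_nth ord0).
Qed.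

Definition wjoin m (w : m.-tuple 'I_3) (a : 'I_3) : m.+1.-tuple 'I_3 :=
  [tuple of rcons w a].
Definition wpre m (u : m.+1.-tuple 'I_3) : m.-tuple 'I_3 :=
  [tuple tnth u (widen_ord (leqnSn m) r) | r < m].
Definition wlast m (u : m.+1.-tuple 'I_3) : 'I_3 := tnth u ord_max.

Lemma wpreK m w a : wpre (@wjoin m w a) = w.
Proof.
apply: eq_from_tnth => r; rewrite tnth_mktuple !(tnth_nth ord0) /=.
by rewrite nth_rcons size_tuple ltn_ord.
Qed.

Lemma wlastK m w a : wlast (@wjoin m w a) = a.
Proof. by rewrite /wlast (tnth_nth ord0) /= nth_rcons size_tuple ltnn eqxx. Qed.

Lemma wjoinK m (u : m.+1.-tuple 'I_3) : wjoin (wpre u) (wlast u) = u.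
Proof.
apply: eq_from_tnth => r; rewrite [LHS](tnth_nth ord0) /= nth_rcons size_tuple.
have [lt|ge] := ltnP r m.
  have := tnth_nth ord0 (wpre u) (Ordinal lt); rewrite /= => <-.
  by rewrite card_ord lt tnth_mktuple; apply: (congr1 (tnth u)); apply: val_inj.
rewrite card_ord ltnNge ge /=.
have -> : nat_of_ord r == m by rewrite eqn_leq ge -ltnS ltn_ord.
by rewrite /wlast; apply: (congr1 (tnth u)); apply: val_inj => /=; apply/eqP; rewrite eqn_leq ge -ltnS ltn_ord.
Qed.

Lemma Lx_join m (w : m.-tuple 'I_3) a p :
  Lx (wjoin w a) p = if p < m then Lx w p else if p == m then nat_of_ord a else 0.
Proof. by rewrite /Lx /= nth_rcons size_tuple; case: ifP => //; case: ifP. Qed.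

Lemma hz_join m (w : m.-tuple 'I_3) a :
  has_zero (wjoin w a) = has_zero w || (nat_of_ord a == 0).
Proof. by rewrite !hzE /= has_rcons orbC. Qed.

Lemma hzP n (u : n.-tuple 'I_3) : reflect (exists2 p, p < n & Lx u p = 0) (has_zero u).
Proof.
rewrite hzE; apply: (iffP (has_nthP ord0)) => [[p]|[p]]; rewrite size_tuple => hp.
  by move/eqP => h; exists p.
by move=> h; exists p => //; apply/eqP.
Qed.

Lemma tri_join m (w : m.-tuple 'I_3) a : 0 < m ->
  is_triword (wjoin w a) = is_triword w && ((nat_of_ord a == 1) ==> ~~ has_zero w).
Proof.
move=> m0; apply/triwordP/andP => [[h1 h2]|[/triwordP[h1 h2] h3]]; split.
- apply/triwordP; split.
    by move=> _; have := h1 isT; rewrite Lx_join m0.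
  move=> p q pq qm; have := h2 p q pq (ltnW qm).
  by rewrite !Lx_join qm (ltn_trans pq qm).
- apply/implyP => a1; apply/hzP => -[p pm zp].
  have := h2 p m pm (ltnSn m); rewrite !Lx_join pm ltnn eqxx zp a1.
  by move=> /(_ erefl).
- by move=> _; rewrite Lx_join m0; exact: h1.
- move=> p q pq; rewrite ltnS leq_eqVlt => /orP[/eqP qm|qm].
    subst q; rewrite !Lx_join ltnn eqxx pq => zp; apply/negP => /eqP a1.
    by move/implyP: h3 => /(_ (introT eqP a1)) /hzP; apply; exists p.
  by rewrite !Lx_join qm (ltn_trans pq qm); exact: h2.
Qed.

Lemma le_join m (w w' : m.-tuple 'I_3) a a' :
  tw_le (wjoin w a) (wjoin w' a') = tw_le w w' && (a <= a').
Proof.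
apply/tw_leP/andP => [h|[/tw_leP h1 h2]]; first split.
- apply/tw_leP => p pm; have := h p (ltnW pm); by rewrite !Lx_join pm.
- by have := h m (ltnSn m); rewrite !Lx_join ltnn eqxx.
- move=> p; rewrite ltnS leq_eqVlt => /orP[/eqP ->|pm].
    by rewrite !Lx_join ltnn eqxx.
  by rewrite !Lx_join pm; exact: h1.
Qed.

Lemma forall_andb (T : finType) (P Q : pred T) :
  [forall x, P x && Q x] = [forall x, P x] && [forall x, Q x].
Proof.
apply/forallP/andP => [h|[/forallP h1 /forallP h2] x]; last by rewrite h1 h2.
by split; apply/forallP => x; case/andP: (h x).
Qed.

Lemma prefix_count (T : Type) (x0 : T) (p : pred T) (s : seq T) :
  (forall q r, q <= r -> r < size s -> p (nth x0 s r) -> p (nth x0 s q)) ->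
  forall r, r < size s -> p (nth x0 s r) = (r < count p s).
Proof.
elim: s => [|x s IH] //= cl r rs.
have cl' : forall q r, q <= r -> r < size s -> p (nth x0 s r) -> p (nth x0 s q).
  by move=> q r' qr r's; apply: (cl q.+1 r'.+1).
case px: (p x) => /=.
  case: r rs => [|r] //= rs; rewrite ltnS; exact: IH.
have c0 : count p s = 0.
  case: (posnP (count p s)) => // cpos.
  have ss : 0 < size s by apply: leq_trans cpos (count_size _ _).
  have := IH cl' 0 ss; rewrite cpos => h.
  by have := cl 0 1 isT ss; rewrite /= h px => /(_ isT).
rewrite c0 ltn0; apply/negbTE; apply/negP => h.
by have := cl 0 r isT rs h; rewrite /= px.
Qed.

Lemma thr_eq k a b : (forall r, r < k -> (r < a) = (r < b)) -> a <= k -> b <= k -> a = b.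
Proof.
move=> h ak bk; case: (ltngtP a b) => // [ab|ba].
  by have := h a (leq_trans ab bk); rewrite ltnn ab.
by have := h b (leq_trans ba ak); rewrite ltnn ba.
Qed.

Section Chains.
Variables (m k : nat).
Local Notation W := (m.-tuple 'I_3).
Local Notation W1 := (m.+1.-tuple 'I_3).

Definition cjoin (p : k.-tuple W * k.-tuple 'I_3) : k.-tuple W1 :=
  [tuple wjoin (tnth p.1 r) (tnth p.2 r) | r < k].
Definition csplit (c : k.-tuple W1) : k.-tuple W * k.-tuple 'I_3 :=
  ([tuple wpre (tnth c r) | r < k], [tuple wlast (tnth c r) | r < k]).

Lemma cjoinK : cancel cjoin csplit.
Proof.
case=> P A; rewrite /csplit; congr pair; apply: eq_from_tnth => r;
  by rewrite !tnth_mktuple ?wpreK ?wlastK.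
Qed.

Lemma csplitK : cancel csplit cjoin.
Proof.
move=> c; apply: eq_from_tnth => r; by rewrite !tnth_mktuple wjoinK.
Qed.

Definition Acond (h : 'I_k -> bool) (i : nat) (A : k.-tuple 'I_3) : bool :=
  [&& [forall r, (nat_of_ord (tnth A r) == 1) ==> ~~ h r],
      [forall r : 'I_k, forall s : 'I_k, (r < s) ==> (nat_of_ord (tnth A r) <= nat_of_ord (tnth A s))] &
      [forall r, (h r || (nat_of_ord (tnth A r) == 0)) == (nat_of_ord r < k - i)]].

Lemma Acond_ext h h' i A : h =1 h' -> Acond h i A = Acond h' i A.
Proof.
move=> e; rewrite /Acond; congr andb; first by apply: eq_forallb => r; rewrite e.
by congr andb; apply: eq_forallb => r; rewrite e.
Qed.

Lemma Z_join i P A : 0 < m ->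
  (cjoin (P, A) \in Zset m.+1 k i) =
  is_chain P && Acond (fun r => has_zero (tnth P r)) i A.
Proof.
move=> m0; rewrite inE /is_chain /Acond.
have -> : [forall r, is_triword (tnth (cjoin (P, A)) r)] =
   [forall r, is_triword (tnth P r)] &&
   [forall r, (nat_of_ord (tnth A r) == 1) ==> ~~ has_zero (tnth P r)].
  rewrite -forall_andb; apply: eq_forallb => r.
  by rewrite tnth_mktuple tri_join.
have -> : [forall r : 'I_k, forall s : 'I_k, (r < s) ==> tw_le (tnth (cjoin (P, A)) r) (tnth (cjoin (P, A)) s)] =
   [forall r : 'I_k, forall s : 'I_k, (r < s) ==> tw_le (tnth P r) (tnth P s)] &&
   [forall r : 'I_k, forall s : 'I_k, (r < s) ==> (nat_of_ord (tnth A r) <= nat_of_ord (tnth A s))].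
  rewrite -forall_andb; apply: eq_forallb => r.
  rewrite -forall_andb; apply: eq_forallb => s.
  rewrite !tnth_mktuple le_join; by case: (r < s).
have -> : [forall r, has_zero (tnth (cjoin (P, A)) r) == (nat_of_ord r < k - i)] =
   [forall r, (has_zero (tnth P r) || (nat_of_ord (tnth A r) == 0)) == (nat_of_ord r < k - i)].
  by apply: eq_forallb => r; rewrite tnth_mktuple hz_join.
by case: [forall r, is_triword _]; case: [forall r, _ ==> _]; case: [forall r, forall s, _];
   case: [forall r, forall s, _]; case: [forall r, _ == _].
Qed.

End Chains.

Lemma chain_profile m k (P : k.-tuple (m.-tuple 'I_3)) :
  is_chain P -> exists2 j, j <= k & P \in Zset m k j.
Proof.
move=> ch; have ch' := ch; move/andP: ch => [_ /forallP hle].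
pose x0 : m.-tuple 'I_3 := [tuple (ord0 : 'I_3) | _ < m].
have cl : forall q r, q <= r -> r < size P ->
    (fun u : m.-tuple 'I_3 => has_zero u) (nth x0 P r) ->
    (fun u : m.-tuple 'I_3 => has_zero u) (nth x0 P q).
  move=> q r qr; rewrite size_tuple => rk /=.
  have qk : q < k by apply: leq_ltn_trans qr rk.
  rewrite leq_eqVlt in qr; case/orP: qr => [/eqP -> //|qr].
  have := hle (Ordinal qk) => /forallP /(_ (Ordinal rk)); rewrite /= qr /= => /tw_leP le.
  move/hzP => [p pm zp]; apply/hzP; exists p => //.
  have := le p pm; rewrite !(tnth_nth x0) /= zp leqn0 => /eqP //.
have ck : count (fun u : m.-tuple 'I_3 => has_zero u) P <= k.
  by have := count_size (fun u : m.-tuple 'I_3 => has_zero u) P; rewrite size_tuple.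
exists (k - count (fun u : m.-tuple 'I_3 => has_zero u) P); first exact: leq_subr.
rewrite inE ch' /=; apply/forallP => r.
have := prefix_count cl (r := r); rewrite size_tuple ltn_ord -tnth_nth /= => -> //.
by rewrite subKn.
Qed.

Lemma Z_uniq m k (P : k.-tuple (m.-tuple 'I_3)) j j' :
  P \in Zset m k j -> P \in Zset m k j' -> j <= k -> j' <= k -> j = j'.
Proof.
rewrite !inE => /andP[_ /forallP h1] /andP[_ /forallP h2] jk j'k.
have : k - j = k - j'.
  apply: (@thr_eq k) => [r rk||]; try exact: leq_subr.
  by have := h1 (Ordinal rk); have := h2 (Ordinal rk); move=> /eqP <- /eqP <-.
lia.
Qed.

Definition mk k (z t : nat) : k.-tuple 'I_3 :=
  [tuple (inord (if r < z then 0 else if r < t then 1 else 2) : 'I_3) | r < k].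

Lemma mkE k z t (r : 'I_k) :
  nat_of_ord (tnth (mk k z t) r) = if r < z then 0 else if r < t then 1 else 2.
Proof. by rewrite tnth_mktuple inordK //; case: ifP => //; case: ifP. Qed.

Lemma mkN k z t r : r < k ->
  Lx (mk k z t) r = if r < z then 0 else if r < t then 1 else 2.
Proof.
move=> rk; have := mkE z t (Ordinal rk); rewrite (tnth_nth ord0) /= => <- //.
Qed.

Definition p0 := fun x : 'I_3 => nat_of_ord x == 0.
Definition p1 := fun x : 'I_3 => nat_of_ord x <= 1.

Lemma count_mk0 k z t : z <= k -> count p0 (mk k z t) = z.
Proof.
move=> zk; apply/esym/(@thr_eq k); last by have := count_size p0 (mk k z t); rewrite size_tuple.
  move=> r rk.
  have cl : forall q r, q <= r -> r < size (mk k z t) -> p0 (nth ord0 (mk k z t) r) -> p0 (nth ord0 (mk k z t) q).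
    move=> q r' qr; rewrite size_tuple => r'k; rewrite /p0.
    rewrite -/(Lx _ r') -/(Lx _ q) !mkN //; last by apply: leq_ltn_trans qr r'k.
    by case: (ltnP r' z); case: (ltnP q z); case: (ltnP r' t); case: (ltnP q t); lia.
  rewrite -(prefix_count cl) ?size_tuple // /p0 -/(Lx _ r) mkN //.
  by case: ifP => //; case: ifP.
done.
Qed.

Lemma count_mk1 k z t : z <= t -> t <= k -> count p1 (mk k z t) = t.
Proof.
move=> zt tk; apply/esym/(@thr_eq k); last by have := count_size p1 (mk k z t); rewrite size_tuple.
  move=> r rk.
  have cl : forall q r, q <= r -> r < size (mk k z t) -> p1 (nth ord0 (mk k z t) r) -> p1 (nth ord0 (mk k z t) q).
    move=> q r' qr; rewrite size_tuple => r'k; rewrite /p1.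
    rewrite -/(Lx _ r') -/(Lx _ q) !mkN //; last by apply: leq_ltn_trans qr r'k.
    by case: (ltnP r' z); case: (ltnP q z); case: (ltnP r' t); case: (ltnP q t); lia.
  rewrite -(prefix_count cl) ?size_tuple // /p1 -/(Lx _ r) mkN //.
  case: ifP => [h|]; last by case: ifP.
  by rewrite (leq_trans h zt).
done.
Qed.

Definition incr k (A : k.-tuple 'I_3) :=
  [forall r : 'I_k, forall s : 'I_k, (r < s) ==> (nat_of_ord (tnth A r) <= nat_of_ord (tnth A s))].

Lemma incr_mk k (A : k.-tuple 'I_3) : incr A -> A = mk k (count p0 A) (count p1 A).
Proof.
move/forallP => h.
have hN : forall q r, q <= r -> r < k -> Lx A q <= Lx A r.
  move=> q r qr rk; have qk : q < k by apply: leq_ltn_trans qr rk.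
  rewrite leq_eqVlt in qr; case/orP: qr => [/eqP -> //|qr].
  have := h (Ordinal qk) => /forallP /(_ (Ordinal rk)); rewrite /= qr /=.
  by rewrite !(tnth_nth ord0).
have c0 : forall r, r < size A -> p0 (nth ord0 A r) = (r < count p0 A).
  apply: prefix_count => q r qr; rewrite size_tuple => rk; rewrite /p0.
  have := hN q r qr rk; rewrite /Lx; lia.
have c1 : forall r, r < size A -> p1 (nth ord0 A r) = (r < count p1 A).
  apply: prefix_count => q r qr; rewrite size_tuple => rk; rewrite /p1.
  have := hN q r qr rk; rewrite /Lx; lia.
apply: eq_from_tnth => r; apply: val_inj; rewrite /= mkE.
have e0 := c0 r; have e1 := c1 r; rewrite size_tuple ltn_ord in e0 e1.
move: (e0 isT) (e1 isT); rewrite -!(tnth_nth ord0) /p0 /p1 => <- <-.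
by case: (tnth A r) => -[|[|[|]]].
Qed.

Definition G k j i (A : k.-tuple 'I_3) := @Acond k (fun r : 'I_k => r < k - j) i A.

Lemma G_mk k j i z t : z <= t -> t <= k ->
  G j i (mk k z t) = ((z == t) || (k - j <= z)) && (maxn (k - j) z == k - i).
Proof.
move=> zt tk; rewrite /G /Acond.
have -> : [forall r : 'I_k, forall s : 'I_k, (r < s) ==>
           (nat_of_ord (tnth (mk k z t) r) <= nat_of_ord (tnth (mk k z t) s))] = true.
  apply/forallP => r; apply/forallP => s; apply/implyP => rs; rewrite !mkE.
  by case: (ltnP r z); case: (ltnP s z); case: (ltnP r t); case: (ltnP s t); lia.
have -> : [forall r : 'I_k, (nat_of_ord (tnth (mk k z t) r) == 1) ==> ~~ (r < k - j)]
          = ((z == t) || (k - j <= z)).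
  apply/forallP/idP => [h|H r].
    case: (ltnP z t) => zt'; last by have -> : z == t by rewrite eqn_leq zt zt'.
    have zk : z < k by apply: leq_trans zt' tk.
    have := h (Ordinal zk); rewrite mkE /= ltnn zt' /= -leqNgt => ->; by rewrite orbT.
  rewrite mkE; apply/implyP.
  case: (ltnP r z) => // rz; case: (ltnP r t) => // rt _.
  case/orP: H => [/eqP ezt|H]; first lia.
  rewrite -leqNgt; exact: leq_trans H rz.
have -> : [forall r : 'I_k, ((r < k - j) || (nat_of_ord (tnth (mk k z t) r) == 0)) == (nat_of_ord r < k - i)]
          = (maxn (k - j) z == k - i).
  apply/forallP/idP => [h|/eqP H r].
    apply/eqP; apply: (@thr_eq k); last exact: leq_subr.
      2: by rewrite geq_max leq_subr (leq_trans zt tk).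
    move=> r rk; have := h (Ordinal rk); rewrite mkE /= => /eqP <-.
    rewrite leq_max; case: (ltnP r z) => rz; rewrite ?orbT ?orbF //.
    by case: (ltnP r t) => _ /=; rewrite orbF.
  rewrite -H; apply/eqP; rewrite mkE leq_max; case: (ltnP r z) => rz; rewrite ?orbT ?orbF //.
  by case: (ltnP r t) => _ /=; rewrite orbF.
by [].
Qed.

Lemma card_G k j i : j <= k -> i <= k ->
  #|[set A : k.-tuple 'I_3 | G j i A]| =
  #|[set p : 'I_k.+1 * 'I_k.+1 | (p.1 <= p.2) &&
       (((nat_of_ord p.1 == p.2) || (k - j <= p.1)) && (maxn (k - j) p.1 == k - i))]|.
Proof.
move=> jk ik.
set D := [set p : 'I_k.+1 * 'I_k.+1 | _].
have -> : [set A : k.-tuple 'I_3 | G j i A] = (fun p : 'I_k.+1 * 'I_k.+1 => mk k p.1 p.2) @: D.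
  apply/setP => A; rewrite inE; apply/idP/imsetP.
  - move=> gA; have iA : incr A by case/and3P: gA.
    have eA := incr_mk iA.
    have c01 : count p0 A <= count p1 A.
      by apply: sub_count => x; rewrite /p0 /p1 => /eqP ->.
    have c1k : count p1 A < k.+1.
      by rewrite ltnS; have := count_size p1 A; rewrite size_tuple.
    have c0k : count p0 A < k.+1 by apply: leq_ltn_trans c01 c1k.
    exists (Ordinal c0k, Ordinal c1k) => //=.
    rewrite inE /= c01 /=; have tk : count p1 A <= k by rewrite -ltnS.
    by rewrite -(G_mk j i c01 tk) -eA.
  - move=> [[z t]]; rewrite inE /= => /andP[zt h] ->.
    by rewrite G_mk // -ltnS.
apply: card_in_imset.
move=> [z t] [z' t']; rewrite !inE /= => /andP[zt _] /andP[zt' _] e.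
have tk : t <= k by rewrite -ltnS.
have t'k : t' <= k by rewrite -ltnS.
have h0 : nat_of_ord z = z'.
  by rewrite -(count_mk0 t (leq_trans zt tk)) e count_mk0 // (leq_trans zt' t'k).
have h1 : nat_of_ord t = t'.
  by rewrite -(count_mk1 zt tk) e count_mk1.
by congr pair; apply: val_inj.
Qed.

Lemma sum_const_range lo hi (f : nat -> nat) c :
  (forall z, lo <= z < hi -> f z = c) -> \sum_(lo <= z < hi) f z = (hi - lo) * c.
Proof.
move=> h; rewrite -sum_nat_const_nat; apply: eq_big_nat => z; exact: h.
Qed.

Lemma pair_count k a b : a <= k -> b <= k ->
  #|[set p : 'I_k.+1 * 'I_k.+1 | (p.1 <= p.2) &&
       (((nat_of_ord p.1 == p.2) || (a <= p.1)) && (maxn a p.1 == b))]| =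
  if a == b then k.+1 else if a < b then k.+1 - b else 0.
Proof.
move=> ak bk.
rewrite -sum1dep_card.
transitivity (\sum_(z < k.+1) \sum_(t < k.+1)
   (if (z <= t) && (((nat_of_ord z == t) || (a <= z)) && (maxn a z == b)) then 1 else 0)).
  rewrite pair_big /= big_mkcond; apply: eq_bigr => -[z t] _ //.
transitivity (\sum_(z < k.+1)
   (if maxn a z == b then (if a <= z then k.+1 - z else 1) else 0)).
  apply: eq_bigr => z _.
  case: (maxn a z == b); last by apply: big1 => t _; rewrite !andbF.
  case: (leqP a z) => az.
    rewrite -(big_mkord xpredT (fun t => if (z <= t) && (((nat_of_ord z == t) || true) && true) then 1 else 0)).
    rewrite (big_cat_nat _ (n := z)) //=; last by apply: ltnW.
    rewrite big1_seq; last first.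
      by move=> t /andP[_]; rewrite mem_index_iota => /andP[_ tz]; rewrite leqNgt tz.
    rewrite add0n (@sum_const_range z k.+1 _ 1) ?muln1 // => t /andP[zt _].
    by rewrite zt orbT.
  rewrite (bigD1 z) //= leqnn eqxx /= big1 // => t tz.
  case: ifP => // /andP[_ /andP[/orP[/eqP e|] _]] //.
  by move: tz; rewrite (val_inj e) eqxx.
transitivity (\sum_(0 <= z < k.+1)
   (if maxn a z == b then (if a <= z then k.+1 - z else 1) else 0)).
  by rewrite big_mkord.
case: (ltngtP a b) => ab.
- rewrite (big_cat_nat _ (n := b)) //= ?(leq_trans bk) //.
  rewrite (big_ltn (m := b)) ?ltnS //.
  rewrite (@sum_const_range 0 b _ 0); last first.
    move=> z /andP[_ zb]; have : maxn a z < b by rewrite gtn_max ab zb.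
    by case: eqP => // ->; rewrite ltnn.
  rewrite (@sum_const_range b.+1 k.+1 _ 0); last first.
    move=> z /andP[bz _]; have : b < maxn a z by rewrite leq_max bz orbT.
    by case: eqP => // ->; rewrite ltnn.
  have -> : maxn a b = b by apply/maxn_idPr/ltnW.
  rewrite eqxx (ltnW ab) !muln0 addn0 add0n.
  by [].
- apply: big1 => z _; have : b < maxn a z by rewrite leq_max ab.
  by case: eqP => // ->; rewrite ltnn.
- subst b; rewrite (big_cat_nat _ (n := a)) //= ?(leq_trans ak) //.
  rewrite (big_ltn (m := a)) ?ltnS //.
  rewrite (@sum_const_range 0 a _ 1); last first.
    move=> z /andP[_ za]; have -> : maxn a z = a by apply/maxn_idPl/ltnW.
    by rewrite eqxx leqNgt za.
  rewrite (@sum_const_range a.+1 k.+1 _ 0); last first.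
    move=> z /andP[az _]; have : a < maxn a z by rewrite leq_max az orbT.
    by case: eqP => // ->; rewrite ltnn.
  rewrite maxnn eqxx leqnn; lia.
Qed.

Definition g k j i := if j == i then k.+1 else if i < j then i.+1 else 0.

Lemma g_val k j i : j <= k -> i <= k -> #|[set A : k.-tuple 'I_3 | G j i A]| = g k j i.
Proof.
move=> jk ik; rewrite card_G // pair_count ?leq_subr // /g.
have -> : (k - j == k - i) = (j == i) by apply/eqP/eqP; lia.
have -> : (k - j < k - i) = (i < j) by apply/idP/idP; lia.
by case: (j == i) => //; case: (i < j) => //; lia.
Qed.

Lemma perP m k i (P : k.-tuple (m.-tuple 'I_3)) : 0 < m -> i <= k ->
  \sum_(A : k.-tuple 'I_3) (if cjoin (P, A) \in Zset m.+1 k i then 1 else 0) =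
  \sum_(j < k.+1) (if P \in Zset m k j then g k j i else 0).
Proof.
move=> m0 ik; case ch: (is_chain P); last first.
  rewrite big1; last by move=> A _; rewrite Z_join // ch.
  by rewrite big1 // => j _; rewrite inE ch.
have [j jk Pj] := chain_profile ch.
have jk' : j < k.+1 by [].
have -> : \sum_(j < k.+1) (if P \in Zset m k j then g k j i else 0) = g k j i.
  rewrite (bigD1 (Ordinal jk')) //= Pj big1 ?addn0 //.
  move=> j' nj; case: ifP => // Pj'; exfalso; move: nj.
  have -> : j' = Ordinal jk' by apply: val_inj; apply/esym/(Z_uniq Pj Pj') => //; rewrite -ltnS.
  by rewrite eqxx.
have hz : forall r : 'I_k, has_zero (tnth P r) = (r < k - j).
  by move: Pj; rewrite inE => /andP[_ /forallP h] r; exact: (eqP (h r)).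
transitivity (\sum_(A : k.-tuple 'I_3) (if G j i A then 1 else 0)).
  by apply: eq_bigr => A _; rewrite Z_join // ch /= (Acond_ext _ _ hz).
rewrite -big_mkcond (sum1dep_card (fun A : k.-tuple _ => G j i A)) g_val //.
Qed.

Lemma main m k i : 0 < m -> i <= k ->
  zfrak i m.+1 k = \sum_(j < k.+1) zfrak j m k * g k j i.
Proof.
move=> m0 ik.
transitivity (\sum_(c : k.-tuple (m.+1.-tuple 'I_3)) (if c \in Zset m.+1 k i then 1 else 0)).
  by rewrite /zfrak -sum1_card big_mkcond.
rewrite (reindex (@cjoin m k)); last first.
  by exists (@csplit m k) => x _; [apply: cjoinK | apply: csplitK].
transitivity (\sum_(P : k.-tuple (m.-tuple 'I_3)) \sum_(A : k.-tuple 'I_3)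
     (if cjoin (P, A) \in Zset m.+1 k i then 1 else 0)).
  by rewrite pair_big; apply: eq_big => // -[P A].
under eq_bigr => P _ do rewrite perP //.
rewrite exchange_big; apply: eq_bigr => j _.
by rewrite -big_mkcond sum_nat_const.
Qed.

Theorem proposition3p6 (n k : nat) (hn : 2 <= n) (hk : 1 <= k) (i : nat) (hi : i <= k) :
  zfrak i n k =
    (k + 1) * zfrak i n.-1 k + (i + 1) * \sum_(i.+1 <= j < k.+1) zfrak j n.-1 k.
Proof.
case: n hn => [|m] // hn /=.
rewrite main //.
have -> : \sum_(j < k.+1) zfrak j m k * g k j i = \sum_(0 <= j < k.+1) zfrak j m k * g k j i.
  by rewrite big_mkord.
rewrite (big_cat_nat _ (n := i)) //=; last by apply: ltnW.
rewrite (big_ltn (m := i)) ?ltnS //.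
rewrite big1_seq; last first.
  move=> j /andP[_]; rewrite mem_index_iota => /andP[_ ji].
  by rewrite /g (ltn_eqF ji) ltnNge (ltnW ji) muln0.
have -> : \sum_(i.+1 <= j < k.+1) zfrak j m k * g k j i = \sum_(i.+1 <= j < k.+1) zfrak j m k * i.+1.
  apply: eq_big_nat => j /andP[ij _].
  by rewrite /g (gtn_eqF ij) ij.
rewrite -big_distrl /g eqxx /=; lia.
Qed.
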